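(* For $a\in\mathbb{R}$, let $\mathfrak{g}_{a,1}$ be the $8$-dimensional real Lie algebra with a basis $\{e^1,\dots,e^8\}$ of its dual $\mathfrak{g}_{a,1}^*$ satisfying $$de^1=de^2=de^3=0,\quad de^4=e^{13},\quad de^5=e^{23},\quad de^6=3e^{14}+e^{25}-2e^{35},$$ $$de^7=2a\,e^{12}+e^{15}+e^{24}+2e^{34},\quad de^8=-2e^{14}+e^{16}-2e^{25}+e^{27}-2e^{45}.$$ Then the Lie algebras $\mathfrak{g}_{a,1}$, $a\in[0,\infty)$, are nilpotent, pairwise non-isomorphic, and each of them admits a complex structure.
   Context: Here $e^{ij}=e^i\wedge e^j$, and $d$ is the Chevalley–Eilenberg differential on $\bigwedge\mathfrak{g}^*$, determined by $d\alpha(X,Y)=-\alpha([X,Y])$ for $\alpha\in\mathfrak{g}^*$; the equations above define the Lie bracket. A complex structure on a real Lie algebra $\mathfrak{g}$ is an endomorphism $J:\mathfrak{g}\to\mathfrak{g}$ with $J^2=-\mathrm{Id}$ and vanishing Nijenhuis tensor $N_J(X,Y)=[X,Y]+J[JX,Y]+J[X,JY]-[JX,JY]=0$ for all $X,Y\in\mathfrak{g}$. *)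

(* Defs.v *)
From HB Require Import structures.
From mathcomp Require Import all_boot all_order all_algebra.
From mathcomp Require Import reals.
Set Implicit Arguments. Unset Strict Implicit. Unset Printing Implicit Defensive.
Import Order.TTheory GRing.Theory Num.Theory.
Local Open Scope ring_scope.

Section G.
Variable R : realType.

(* Vectors of g are row vectors x in R^8, written in the basis e_1..e_8
   dual to e^1..e^8.  coord x i = e^i(x), 1-based as in the paper. *)
Definition coord (x : 'rV[R]_8) (i : nat) : R := x ord0 (inord i.-1).

Definition e2 (x y : 'rV[R]_8) (i j : nat) : R :=
  coord x i * coord y j - coord x j * coord y i.

Definition dform (a : R) (k : nat) (x y : 'rV[R]_8) : R :=
  match k with
  | 4 => e2 x y 1 3
  | 5 => e2 x y 2 3
  | 6 => 3 * e2 x y 1 4 + e2 x y 2 5 - 2 * e2 x y 3 5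
  | 7 => 2 * a * e2 x y 1 2 + e2 x y 1 5 + e2 x y 2 4 + 2 * e2 x y 3 4
  | 8 => - 2 * e2 x y 1 4 + e2 x y 1 6 - 2 * e2 x y 2 5 + e2 x y 2 7
         - 2 * e2 x y 4 5
  | _ => 0
  end.

(* The bracket determined by d alpha(X,Y) = - alpha([X,Y]):
   e^k([x,y]) = - de^k(x,y). *)
Definition gbr (a : R) (x y : 'rV[R]_8) : 'rV[R]_8 :=
  \row_(k < 8) - dform a k.+1 x y.

Fixpoint itbr (br : 'rV[R]_8 -> 'rV[R]_8 -> 'rV[R]_8)
    (xs : seq 'rV[R]_8) (y : 'rV[R]_8) : 'rV[R]_8 :=
  match xs with
  | [::] => y
  | x :: xs' => br x (itbr br xs' y)
  end.

(* Nilpotent: the lower central series vanishes at some step, i.e. all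
   brackets of some fixed length n+1 vanish (g^{(n)} is spanned by them). *)
Definition lie_nilpotent (br : 'rV[R]_8 -> 'rV[R]_8 -> 'rV[R]_8) : Prop :=
  exists n : nat, forall (xs : seq 'rV[R]_8) (y : 'rV[R]_8),
    size xs = n -> itbr br xs y = 0.

Definition lie_isomorphic (br1 br2 : 'rV[R]_8 -> 'rV[R]_8 -> 'rV[R]_8) : Prop :=
  exists A : 'M[R]_8, A \in unitmx /\
    forall x y, br1 x y *m A = br2 (x *m A) (y *m A).

(* Complex structure: J (acting by x |-> x *m J) with J^2 = -Id and
   vanishing Nijenhuis tensor. *)
Definition complex_structure (br : 'rV[R]_8 -> 'rV[R]_8 -> 'rV[R]_8)
    (J : 'M[R]_8) : Prop :=
  J *m J = - 1%:M /\
  forall x y, br x y + br (x *m J) y *m J + br x (y *m J) *m J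
              - br (x *m J) (y *m J) = 0.

End G.

(* Main.v *)
From Pilot Require Import Defs.
From HB Require Import structures.
From mathcomp Require Import all_boot all_order all_algebra.
From mathcomp Require Import reals.
From mathcomp Require Import ring lra.
Import Order.TTheory GRing.Theory Num.Theory.
Local Open Scope ring_scope.
Set Implicit Arguments. Unset Strict Implicit.

Arguments Pilot.Defs.coord : simpl never.

Section S.
Variable R : realType.
Notation cd := (@Pilot.Defs.coord R).

Lemma xcd (x : 'rV[R]_8) (j : 'I_8) : x ord0 j = cd x j.+1.
Proof. by rewrite /Defs.coord /= inord_val. Qed.

Definition ent (A : 'M[R]_8) (i j : nat) : R := A (inord i.-1) (inord j.-1).
Arguments ent : simpl never.

Lemma coord_mul (x : 'rV[R]_8) (A : 'M[R]_8) k : cd (x *m A) k =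
  cd x 1 * ent A 1 k + cd x 2 * ent A 2 k + cd x 3 * ent A 3 k +
  cd x 4 * ent A 4 k + cd x 5 * ent A 5 k + cd x 6 * ent A 6 k +
  cd x 7 * ent A 7 k + cd x 8 * ent A 8 k.
Proof.
rewrite /Defs.coord /ent mxE !big_ord_recl big_ord0 addr0 /=.
have e0 : (inord 0 : 'I_8) = ord0 by apply: val_inj; rewrite /= inordK.
have e1 : (inord 1 : 'I_8) = lift ord0 ord0 by apply: val_inj; rewrite /= inordK.
have e2 : (inord 2 : 'I_8) = lift ord0 (lift ord0 ord0) by apply: val_inj; rewrite /= inordK.
have e3 : (inord 3 : 'I_8) = lift ord0 (lift ord0 (lift ord0 ord0)) by apply: val_inj; rewrite /= inordK.
have e4 : (inord 4 : 'I_8) = lift ord0 (lift ord0 (lift ord0 (lift ord0 ord0))) by apply: val_inj; rewrite /= inordK.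
have e5 : (inord 5 : 'I_8) = lift ord0 (lift ord0 (lift ord0 (lift ord0 (lift ord0 ord0)))) by apply: val_inj; rewrite /= inordK.
have e6 : (inord 6 : 'I_8) = lift ord0 (lift ord0 (lift ord0 (lift ord0 (lift ord0 (lift ord0 ord0))))) by apply: val_inj; rewrite /= inordK.
have e7 : (inord 7 : 'I_8) = lift ord0 (lift ord0 (lift ord0 (lift ord0 (lift ord0 (lift ord0 (lift ord0 ord0)))))) by apply: val_inj; rewrite /= inordK.
by rewrite e0 e1 e2 e3 e4 e5 e6 e7 !addrA.
Qed.

Lemma cd_add (x y : 'rV[R]_8) k : cd (x + y) k = cd x k + cd y k.
Proof. by rewrite /Defs.coord mxE. Qed.
Lemma cd_opp (x : 'rV[R]_8) k : cd (- x) k = - cd x k.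
Proof. by rewrite /Defs.coord mxE. Qed.

Lemma cd_gbr a (x y : 'rV[R]_8) k : (0 < k <= 8)%N -> cd (gbr a x y) k = - dform a k x y.
Proof.
case/andP => k0 k8; rewrite /Defs.coord /gbr mxE inordK; last by case: k k0 k8.
by rewrite prednK.
Qed.

Lemma rv0 (x : 'rV[R]_8) : (forall k, (0 < k <= 8)%N -> cd x k = 0) -> x = 0.
Proof.
move=> H; apply/rowP => j; rewrite mxE.
by move: (H j.+1); rewrite /Defs.coord /= inord_val => -> //; rewrite ltn_ord.
Qed.

Definition ev (i : nat) : 'rV[R]_8 := delta_mx 0 (inord i.-1).

Lemma cd_ev i l : (0 < i <= 8)%N -> (0 < l <= 8)%N -> cd (ev i) l = if i == l then 1 else 0.
Proof.
case/andP => i0 i8 /andP[l0 l8].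
rewrite /Defs.coord /ev mxE eqxx /= -val_eqE /= !inordK; last first.
- by case: l l0 l8.
- by case: i i0 i8.
by case: i i0 i8 => // i _ _; case: l l0 l8 => // l _ _ /=; rewrite eqSS eq_sym; case: (i == l).
Qed.

Lemma cd_evA i (A : 'M[R]_8) k : cd (ev i *m A) k = ent A i k.
Proof. by rewrite /ev -rowE /Defs.coord /ent mxE. Qed.


Lemma nilp (a : R) : lie_nilpotent (gbr a).
Proof.
exists 4%N => -[|x1 [|x2 [|x3 [|x4 [|]]]]] //= y _.
set y1 := gbr a x4 y.
have h11 : cd y1 1 = 0 by rewrite cd_gbr //= oppr0.
have h12 : cd y1 2 = 0 by rewrite cd_gbr //= oppr0.
have h13 : cd y1 3 = 0 by rewrite cd_gbr //= oppr0.
set y2 := gbr a x3 y1.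
have h21 : cd y2 1 = 0 by rewrite cd_gbr //= oppr0.
have h22 : cd y2 2 = 0 by rewrite cd_gbr //= oppr0.
have h23 : cd y2 3 = 0 by rewrite cd_gbr //= oppr0.
have h24 : cd y2 4 = 0 by rewrite cd_gbr // /dform /e2 h11 h13; ring.
have h25 : cd y2 5 = 0 by rewrite cd_gbr // /dform /e2 h12 h13; ring.
set y3 := gbr a x2 y2.
have h31 : cd y3 1 = 0 by rewrite cd_gbr //= oppr0.
have h32 : cd y3 2 = 0 by rewrite cd_gbr //= oppr0.
have h33 : cd y3 3 = 0 by rewrite cd_gbr //= oppr0.
have h34 : cd y3 4 = 0 by rewrite cd_gbr // /dform /e2 h21 h23; ring.
have h35 : cd y3 5 = 0 by rewrite cd_gbr // /dform /e2 h22 h23; ring.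
have h36 : cd y3 6 = 0 by rewrite cd_gbr // /dform /e2 h21 h22 h23 h24 h25; ring.
have h37 : cd y3 7 = 0 by rewrite cd_gbr // /dform /e2 h21 h22 h23 h24 h25; ring.
apply: rv0 => k /andP[k0 k8].
rewrite cd_gbr; last by rewrite k0 k8.
case: k k0 k8 => [|[|[|[|[|[|[|[|[|k]]]]]]]]] //= _ _; rewrite ?oppr0 //;
  rewrite /e2 ?h31 ?h32 ?h33 ?h34 ?h35 ?h36 ?h37; ring.
Qed.

Definition jf (i j : nat) : R :=
  match i, j with
  | 1, 2 => 1 | 2, 1 => -1 | 4, 5 => 1 | 5, 4 => -1
  | 6, 7 => 1 | 7, 6 => -1 | 3, 8 => 1 | 8, 3 => -1
  | _, _ => 0 end.
Definition Jm : 'M[R]_8 := \matrix_(i < 8, j < 8) jf i.+1 j.+1.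

Lemma ent_J i j : (0 < i <= 8)%N -> (0 < j <= 8)%N -> ent Jm i j = jf i j.
Proof.
case/andP => i0 i8 /andP[j0 j8]; rewrite /ent mxE !inordK.
- by rewrite !prednK.
- by case: j j0 j8.
- by case: i i0 i8.
Qed.

Lemma ent_eq (M N : 'M[R]_8) : (forall i j, (0 < i <= 8)%N -> (0 < j <= 8)%N -> ent M i j = ent N i j) -> M = N.
Proof.
move=> H; apply/matrixP => i j.
move: (H i.+1 j.+1); rewrite /ent /= !inord_val; apply; by rewrite /= ltn_ord.
Qed.

Lemma ent_mul (M N : 'M[R]_8) i j : ent (M *m N) i j =
  ent M i 1 * ent N 1 j + ent M i 2 * ent N 2 j + ent M i 3 * ent N 3 j +
  ent M i 4 * ent N 4 j + ent M i 5 * ent N 5 j + ent M i 6 * ent N 6 j +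
  ent M i 7 * ent N 7 j + ent M i 8 * ent N 8 j.
Proof. by rewrite -cd_evA mulmxA coord_mul !cd_evA. Qed.

Lemma ent_scal (c : R) i j : (0 < i <= 8)%N -> (0 < j <= 8)%N -> ent (c%:M) i j = if i == j then c else 0.
Proof.
case/andP => i0 i8 /andP[j0 j8]; rewrite /ent mxE -val_eqE /= !inordK.
- by case: i i0 i8 => // i _ _; case: j j0 j8 => // j _ _ /=; rewrite eqSS; case: (i == j).
- by case: j j0 j8.
- by case: i i0 i8.
Qed.

Lemma J2 : Jm *m Jm = - 1%:M.
Proof.
rewrite -scaleN1r scalemx1.
apply: ent_eq => i j Hi Hj; rewrite ent_mul ent_scal // !ent_J //.
by case: i Hi => [|[|[|[|[|[|[|[|[|i]]]]]]]]] //= _;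
   case: j Hj => [|[|[|[|[|[|[|[|[|j]]]]]]]]] //= _; ring.
Qed.

Lemma nij (a : R) : complex_structure (gbr a) Jm.
Proof.
split; first exact: J2.
move=> x y; apply: rv0 => k /andP[k0 k8].
case: k k0 k8 => [|[|[|[|[|[|[|[|[|k]]]]]]]]] //= _ _;
  rewrite !cd_add !cd_opp !coord_mul !cd_gbr // !ent_J //= /e2 !coord_mul !ent_J //=; ring.
Qed.


Lemma zk1 (P x k : R) : k != 0 -> P = 0 -> k * x = P -> x = 0.
Proof. by move=> kn -> /eqP; rewrite mulf_eq0 (negbTE kn) => /eqP. Qed.
Lemma eq_sub (P Q : R) : P = 0 -> Q = P -> Q = 0.
Proof. by move=> -> ->. Qed.
Lemma lk1 (P x y k k1 : R) : k != 0 -> P = 0 -> k * (x - y) = k1 * P -> x = y.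
Proof. by move=> kn -> /eqP; rewrite mulr0 mulf_eq0 (negbTE kn) subr_eq0 => /eqP. Qed.
Lemma lk2 (P1 P2 x y k k1 k2 : R) : k != 0 -> P1 = 0 -> P2 = 0 -> k * (x - y) = k1 * P1 + k2 * P2 -> x = y.
Proof. by move=> kn -> -> /eqP; rewrite !mulr0 addr0 mulf_eq0 (negbTE kn) subr_eq0 => /eqP. Qed.
Lemma lk3 (P1 P2 P3 x y k k1 k2 k3 : R) : k != 0 -> P1 = 0 -> P2 = 0 -> P3 = 0 ->
  k * (x - y) = k1 * P1 + k2 * P2 + k3 * P3 -> x = y.
Proof. by move=> kn -> -> -> /eqP; rewrite !mulr0 !addr0 mulf_eq0 (negbTE kn) subr_eq0 => /eqP. Qed.
Lemma zmul2 (x d P1 P2 k1 k2 : R) : d != 0 -> P1 = 0 -> P2 = 0 -> x * d = k1 * P1 + k2 * P2 -> x = 0.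
Proof. by move=> dn -> -> /eqP; rewrite !mulr0 addr0 mulf_eq0 (negbTE dn) orbF => /eqP. Qed.
Lemma sub0 (x y : R) : x = y -> x - y = 0.
Proof. by move=> ->; rewrite subrr. Qed.
Lemma n2 : (2 : R) != 0. Proof. by rewrite pnatr_eq0. Qed.
Lemma n3 : (3 : R) != 0. Proof. by rewrite pnatr_eq0. Qed.
Lemma n8 : (8 : R) != 0. Proof. by rewrite pnatr_eq0. Qed.
Lemma nm2 : (-2 : R) != 0. Proof. by rewrite oppr_eq0 pnatr_eq0. Qed.

Lemma key (m n : nat -> nat -> R) (a b : R) : 0 <= a -> 0 <= b ->
  m 8 1 * n 1 8 + m 8 2 * n 2 8 + m 8 3 * n 3 8 + m 8 4 * n 4 8 + m 8 5 * n 5 8 + m 8 6 * n 6 8 + m 8 7 * n 7 8 + m 8 8 * n 8 8 = 1 ->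
  (m 4 1) = 0 ->
  (m 4 2) = 0 ->
  (m 4 3) = 0 ->
  (m 5 1) = 0 ->
  (m 5 2) = 0 ->
  (m 5 3) = 0 ->
  (-2)*(m 6 1) = 0 ->
  (-2)*(m 6 2) = 0 ->
  (-2)*(m 6 3) = 0 ->
  (m 7 1) = 0 ->
  (m 7 2) = 0 ->
  (m 7 3) = 0 ->
  (m 8 1) = 0 ->
  (m 8 2) = 0 ->
  (m 8 3) = 0 ->
  -((m 3 1)*(m 5 3)) + (m 3 3)*(m 5 1) + (-2)*(m 6 4) = 0 ->
  -((m 3 2)*(m 5 3)) + (m 3 3)*(m 5 2) + (-2)*(m 6 5) = 0 ->
  -((m 1 1)*(m 5 3)) + (m 1 3)*(m 5 1) + (m 7 4) = 0 ->
  -((m 1 2)*(m 5 3)) + (m 1 3)*(m 5 2) + (m 7 5) = 0 ->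
  -((m 1 1)*(m 6 3)) + (m 1 3)*(m 6 1) + (m 8 4) = 0 ->
  -((m 1 2)*(m 6 3)) + (m 1 3)*(m 6 2) + (m 8 5) = 0 ->
  (-3)*(m 1 1)*(m 6 4) + -((m 1 2)*(m 6 5)) + 2*(m 1 3)*(m 6 5) + 3*(m 1 4)*(m 6 1) + (m 1 5)*(m 6 2) + (-2)*(m 1 5)*(m 6 3) + (m 8 6) = 0 ->
  (-2)*b*(m 1 1)*(m 6 2) + 2*b*(m 1 2)*(m 6 1) + -((m 1 1)*(m 6 5)) + -((m 1 2)*(m 6 4)) + (-2)*(m 1 3)*(m 6 4) + (m 1 4)*(m 6 2) + 2*(m 1 4)*(m 6 3) + (m 1 5)*(m 6 1) + (m 8 7) = 0 ->
  2*a*(m 7 4) + -((m 1 1)*(m 2 3)) + (m 1 3)*(m 2 1) = 0 ->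
  2*a*(m 7 5) + -((m 1 2)*(m 2 3)) + (m 1 3)*(m 2 2) = 0 ->
  -((m 1 1)*(m 3 3)) + (m 1 3)*(m 3 1) + (m 4 4) = 0 ->
  -((m 1 2)*(m 3 3)) + (m 1 3)*(m 3 2) + (m 4 5) = 0 ->
  -((m 2 1)*(m 3 3)) + (m 2 3)*(m 3 1) + (m 5 4) = 0 ->
  -((m 2 2)*(m 3 3)) + (m 2 3)*(m 3 2) + (m 5 5) = 0 ->
  2*(m 4 1)*(m 5 4) + -((m 4 1)*(m 5 6)) + 2*(m 4 2)*(m 5 5) + -((m 4 2)*(m 5 7)) + (-2)*(m 4 4)*(m 5 1) + 2*(m 4 4)*(m 5 5) + (-2)*(m 4 5)*(m 5 2) + (-2)*(m 4 5)*(m 5 4) + (m 4 6)*(m 5 1) + (m 4 7)*(m 5 2) + (-2)*(m 8 8) = 0 ->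
  2*(m 1 1)*(m 6 4) + -((m 1 1)*(m 6 6)) + 2*(m 1 2)*(m 6 5) + -((m 1 2)*(m 6 7)) + (-2)*(m 1 4)*(m 6 1) + 2*(m 1 4)*(m 6 5) + (-2)*(m 1 5)*(m 6 2) + (-2)*(m 1 5)*(m 6 4) + (m 1 6)*(m 6 1) + (m 1 7)*(m 6 2) + (m 8 8) = 0 ->
  2*(m 1 1)*(m 7 4) + -((m 1 1)*(m 7 6)) + 2*(m 1 2)*(m 7 5) + -((m 1 2)*(m 7 7)) + (-2)*(m 1 4)*(m 7 1) + 2*(m 1 4)*(m 7 5) + (-2)*(m 1 5)*(m 7 2) + (-2)*(m 1 5)*(m 7 4) + (m 1 6)*(m 7 1) + (m 1 7)*(m 7 2) = 0 ->
  2*(m 2 1)*(m 6 4) + -((m 2 1)*(m 6 6)) + 2*(m 2 2)*(m 6 5) + -((m 2 2)*(m 6 7)) + (-2)*(m 2 4)*(m 6 1) + 2*(m 2 4)*(m 6 5) + (-2)*(m 2 5)*(m 6 2) + (-2)*(m 2 5)*(m 6 4) + (m 2 6)*(m 6 1) + (m 2 7)*(m 6 2) = 0 ->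
  2*(m 2 1)*(m 7 4) + -((m 2 1)*(m 7 6)) + 2*(m 2 2)*(m 7 5) + -((m 2 2)*(m 7 7)) + (-2)*(m 2 4)*(m 7 1) + 2*(m 2 4)*(m 7 5) + (-2)*(m 2 5)*(m 7 2) + (-2)*(m 2 5)*(m 7 4) + (m 2 6)*(m 7 1) + (m 2 7)*(m 7 2) + (m 8 8) = 0 ->
  2*(m 3 1)*(m 6 4) + -((m 3 1)*(m 6 6)) + 2*(m 3 2)*(m 6 5) + -((m 3 2)*(m 6 7)) + (-2)*(m 3 4)*(m 6 1) + 2*(m 3 4)*(m 6 5) + (-2)*(m 3 5)*(m 6 2) + (-2)*(m 3 5)*(m 6 4) + (m 3 6)*(m 6 1) + (m 3 7)*(m 6 2) = 0 ->
  2*(m 3 1)*(m 7 4) + -((m 3 1)*(m 7 6)) + 2*(m 3 2)*(m 7 5) + -((m 3 2)*(m 7 7)) + (-2)*(m 3 4)*(m 7 1) + 2*(m 3 4)*(m 7 5) + (-2)*(m 3 5)*(m 7 2) + (-2)*(m 3 5)*(m 7 4) + (m 3 6)*(m 7 1) + (m 3 7)*(m 7 2) = 0 ->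
  (-3)*(m 3 1)*(m 4 4) + -((m 3 2)*(m 4 5)) + 2*(m 3 3)*(m 4 5) + 3*(m 3 4)*(m 4 1) + (m 3 5)*(m 4 2) + (-2)*(m 3 5)*(m 4 3) + 2*(m 7 6) = 0 ->
  (-2)*b*(m 3 1)*(m 4 2) + 2*b*(m 3 2)*(m 4 1) + -((m 3 1)*(m 4 5)) + -((m 3 2)*(m 4 4)) + (-2)*(m 3 3)*(m 4 4) + (m 3 4)*(m 4 2) + 2*(m 3 4)*(m 4 3) + (m 3 5)*(m 4 1) + 2*(m 7 7) = 0 ->
  (-3)*(m 3 1)*(m 5 4) + -((m 3 2)*(m 5 5)) + 2*(m 3 3)*(m 5 5) + 3*(m 3 4)*(m 5 1) + (m 3 5)*(m 5 2) + (-2)*(m 3 5)*(m 5 3) + (-2)*(m 6 6) = 0 ->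
  (-2)*b*(m 3 1)*(m 5 2) + 2*b*(m 3 2)*(m 5 1) + -((m 3 1)*(m 5 5)) + -((m 3 2)*(m 5 4)) + (-2)*(m 3 3)*(m 5 4) + (m 3 4)*(m 5 2) + 2*(m 3 4)*(m 5 3) + (m 3 5)*(m 5 1) + (-2)*(m 6 7) = 0 ->
  (-3)*(m 2 1)*(m 5 4) + -((m 2 2)*(m 5 5)) + 2*(m 2 3)*(m 5 5) + 3*(m 2 4)*(m 5 1) + (m 2 5)*(m 5 2) + (-2)*(m 2 5)*(m 5 3) + (m 6 6) + (-2)*(m 8 6) = 0 ->
  (-2)*b*(m 2 1)*(m 5 2) + 2*b*(m 2 2)*(m 5 1) + -((m 2 1)*(m 5 5)) + -((m 2 2)*(m 5 4)) + (-2)*(m 2 3)*(m 5 4) + (m 2 4)*(m 5 2) + 2*(m 2 4)*(m 5 3) + (m 2 5)*(m 5 1) + (m 6 7) + (-2)*(m 8 7) = 0 ->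
  (-3)*(m 1 1)*(m 4 4) + -((m 1 2)*(m 4 5)) + 2*(m 1 3)*(m 4 5) + 3*(m 1 4)*(m 4 1) + (m 1 5)*(m 4 2) + (-2)*(m 1 5)*(m 4 3) + 3*(m 6 6) + (-2)*(m 8 6) = 0 ->
  (-2)*b*(m 1 1)*(m 4 2) + 2*b*(m 1 2)*(m 4 1) + -((m 1 1)*(m 4 5)) + -((m 1 2)*(m 4 4)) + (-2)*(m 1 3)*(m 4 4) + (m 1 4)*(m 4 2) + 2*(m 1 4)*(m 4 3) + (m 1 5)*(m 4 1) + 3*(m 6 7) + (-2)*(m 8 7) = 0 ->
  2*a*(m 7 6) + (-3)*(m 1 1)*(m 2 4) + -((m 1 2)*(m 2 5)) + 2*(m 1 3)*(m 2 5) + 3*(m 1 4)*(m 2 1) + (m 1 5)*(m 2 2) + (-2)*(m 1 5)*(m 2 3) = 0 ->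
  (-3)*(m 1 1)*(m 3 4) + -((m 1 2)*(m 3 5)) + 2*(m 1 3)*(m 3 5) + 3*(m 1 4)*(m 3 1) + (m 1 5)*(m 3 2) + (-2)*(m 1 5)*(m 3 3) + (m 4 6) = 0 ->
  2*(m 3 1)*(m 5 4) + -((m 3 1)*(m 5 6)) + 2*(m 3 2)*(m 5 5) + -((m 3 2)*(m 5 7)) + (-2)*(m 3 4)*(m 5 1) + 2*(m 3 4)*(m 5 5) + (-2)*(m 3 5)*(m 5 2) + (-2)*(m 3 5)*(m 5 4) + (m 3 6)*(m 5 1) + (m 3 7)*(m 5 2) + (-2)*(m 6 8) = 0 ->
  2*(m 1 1)*(m 4 4) + -((m 1 1)*(m 4 6)) + 2*(m 1 2)*(m 4 5) + -((m 1 2)*(m 4 7)) + (-2)*(m 1 4)*(m 4 1) + 2*(m 1 4)*(m 4 5) + (-2)*(m 1 5)*(m 4 2) + (-2)*(m 1 5)*(m 4 4) + (m 1 6)*(m 4 1) + (m 1 7)*(m 4 2) + 3*(m 6 8) + (-2)*(m 8 8) = 0 ->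
  (-2)*b*(m 2 1)*(m 3 2) + 2*b*(m 2 2)*(m 3 1) + -((m 2 1)*(m 3 5)) + -((m 2 2)*(m 3 4)) + (-2)*(m 2 3)*(m 3 4) + (m 2 4)*(m 3 2) + 2*(m 2 4)*(m 3 3) + (m 2 5)*(m 3 1) + (m 5 7) = 0 ->
  2*(m 2 1)*(m 5 4) + -((m 2 1)*(m 5 6)) + 2*(m 2 2)*(m 5 5) + -((m 2 2)*(m 5 7)) + (-2)*(m 2 4)*(m 5 1) + 2*(m 2 4)*(m 5 5) + (-2)*(m 2 5)*(m 5 2) + (-2)*(m 2 5)*(m 5 4) + (m 2 6)*(m 5 1) + (m 2 7)*(m 5 2) + (m 6 8) + (-2)*(m 8 8) = 0 ->
  (-2)*b*(m 1 1)*(m 3 2) + 2*b*(m 1 2)*(m 3 1) + -((m 1 1)*(m 3 5)) + -((m 1 2)*(m 3 4)) + (-2)*(m 1 3)*(m 3 4) + (m 1 4)*(m 3 2) + 2*(m 1 4)*(m 3 3) + (m 1 5)*(m 3 1) + (m 4 7) = 0 ->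
  2*(m 3 1)*(m 4 4) + -((m 3 1)*(m 4 6)) + 2*(m 3 2)*(m 4 5) + -((m 3 2)*(m 4 7)) + (-2)*(m 3 4)*(m 4 1) + 2*(m 3 4)*(m 4 5) + (-2)*(m 3 5)*(m 4 2) + (-2)*(m 3 5)*(m 4 4) + (m 3 6)*(m 4 1) + (m 3 7)*(m 4 2) + 2*(m 7 8) = 0 ->
  2*(m 2 1)*(m 4 4) + -((m 2 1)*(m 4 6)) + 2*(m 2 2)*(m 4 5) + -((m 2 2)*(m 4 7)) + (-2)*(m 2 4)*(m 4 1) + 2*(m 2 4)*(m 4 5) + (-2)*(m 2 5)*(m 4 2) + (-2)*(m 2 5)*(m 4 4) + (m 2 6)*(m 4 1) + (m 2 7)*(m 4 2) + (m 7 8) = 0 ->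
  2*a*(m 7 7) + (-2)*b*(m 1 1)*(m 2 2) + 2*b*(m 1 2)*(m 2 1) + -((m 1 1)*(m 2 5)) + -((m 1 2)*(m 2 4)) + (-2)*(m 1 3)*(m 2 4) + (m 1 4)*(m 2 2) + 2*(m 1 4)*(m 2 3) + (m 1 5)*(m 2 1) = 0 ->
  a = b.
Proof.
move=> a0 b0 hinv E131 E132 E133 E231 E232 E233 E351 E352 E353 E151 E152 E153 E161 E162 E163 E354 E355 E154 E155 E164 E165 E166 E167 E124 E125 E134 E135 E234 E235 E458 E168 E178 E268 E278 E368 E378 E346 E347 E356 E357 E256 E257 E146 E147 E126 E136 E358 E148 E237 E258 E137 E348 E248 E127.
have z41 : m 4 1 = 0 by apply: (zk1 (k:=1) (oner_neq0 _) E131); rewrite ?addr0; ring.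
have z42 : m 4 2 = 0 by apply: (zk1 (k:=1) (oner_neq0 _) E132); rewrite ?z41; ring.
have z43 : m 4 3 = 0 by apply: (zk1 (k:=1) (oner_neq0 _) E133); rewrite ?z41 ?z42; ring.
have z51 : m 5 1 = 0 by apply: (zk1 (k:=1) (oner_neq0 _) E231); rewrite ?z41 ?z42 ?z43; ring.
have z52 : m 5 2 = 0 by apply: (zk1 (k:=1) (oner_neq0 _) E232); rewrite ?z41 ?z42 ?z43 ?z51; ring.
have z53 : m 5 3 = 0 by apply: (zk1 (k:=1) (oner_neq0 _) E233); rewrite ?z41 ?z42 ?z43 ?z51 ?z52; ring.
have z61 : m 6 1 = 0 by apply: (zk1 (k:=-2) nm2 E351); rewrite ?z41 ?z42 ?z43 ?z51 ?z52 ?z53; ring.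
have z62 : m 6 2 = 0 by apply: (zk1 (k:=-2) nm2 E352); rewrite ?z41 ?z42 ?z43 ?z51 ?z52 ?z53 ?z61; ring.
have z63 : m 6 3 = 0 by apply: (zk1 (k:=-2) nm2 E353); rewrite ?z41 ?z42 ?z43 ?z51 ?z52 ?z53 ?z61 ?z62; ring.
have z71 : m 7 1 = 0 by apply: (zk1 (k:=1) (oner_neq0 _) E151); rewrite ?z41 ?z42 ?z43 ?z51 ?z52 ?z53 ?z61 ?z62 ?z63; ring.
have z72 : m 7 2 = 0 by apply: (zk1 (k:=1) (oner_neq0 _) E152); rewrite ?z41 ?z42 ?z43 ?z51 ?z52 ?z53 ?z61 ?z62 ?z63 ?z71; ring.
have z73 : m 7 3 = 0 by apply: (zk1 (k:=1) (oner_neq0 _) E153); rewrite ?z41 ?z42 ?z43 ?z51 ?z52 ?z53 ?z61 ?z62 ?z63 ?z71 ?z72; ring.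
have z81 : m 8 1 = 0 by apply: (zk1 (k:=1) (oner_neq0 _) E161); rewrite ?z41 ?z42 ?z43 ?z51 ?z52 ?z53 ?z61 ?z62 ?z63 ?z71 ?z72 ?z73; ring.
have z82 : m 8 2 = 0 by apply: (zk1 (k:=1) (oner_neq0 _) E162); rewrite ?z41 ?z42 ?z43 ?z51 ?z52 ?z53 ?z61 ?z62 ?z63 ?z71 ?z72 ?z73 ?z81; ring.
have z83 : m 8 3 = 0 by apply: (zk1 (k:=1) (oner_neq0 _) E163); rewrite ?z41 ?z42 ?z43 ?z51 ?z52 ?z53 ?z61 ?z62 ?z63 ?z71 ?z72 ?z73 ?z81 ?z82; ring.
have z64 : m 6 4 = 0 by apply: (zk1 (k:=-2) nm2 E354); rewrite ?z41 ?z42 ?z43 ?z51 ?z52 ?z53 ?z61 ?z62 ?z63 ?z71 ?z72 ?z73 ?z81 ?z82 ?z83; ring.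
have z65 : m 6 5 = 0 by apply: (zk1 (k:=-2) nm2 E355); rewrite ?z41 ?z42 ?z43 ?z51 ?z52 ?z53 ?z61 ?z62 ?z63 ?z71 ?z72 ?z73 ?z81 ?z82 ?z83 ?z64; ring.
have z74 : m 7 4 = 0 by apply: (zk1 (k:=1) (oner_neq0 _) E154); rewrite ?z41 ?z42 ?z43 ?z51 ?z52 ?z53 ?z61 ?z62 ?z63 ?z71 ?z72 ?z73 ?z81 ?z82 ?z83 ?z64 ?z65; ring.
have z75 : m 7 5 = 0 by apply: (zk1 (k:=1) (oner_neq0 _) E155); rewrite ?z41 ?z42 ?z43 ?z51 ?z52 ?z53 ?z61 ?z62 ?z63 ?z71 ?z72 ?z73 ?z81 ?z82 ?z83 ?z64 ?z65 ?z74; ring.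
have z84 : m 8 4 = 0 by apply: (zk1 (k:=1) (oner_neq0 _) E164); rewrite ?z41 ?z42 ?z43 ?z51 ?z52 ?z53 ?z61 ?z62 ?z63 ?z71 ?z72 ?z73 ?z81 ?z82 ?z83 ?z64 ?z65 ?z74 ?z75; ring.
have z85 : m 8 5 = 0 by apply: (zk1 (k:=1) (oner_neq0 _) E165); rewrite ?z41 ?z42 ?z43 ?z51 ?z52 ?z53 ?z61 ?z62 ?z63 ?z71 ?z72 ?z73 ?z81 ?z82 ?z83 ?z64 ?z65 ?z74 ?z75 ?z84; ring.
have z86 : m 8 6 = 0 by apply: (zk1 (k:=1) (oner_neq0 _) E166); rewrite ?z41 ?z42 ?z43 ?z51 ?z52 ?z53 ?z61 ?z62 ?z63 ?z71 ?z72 ?z73 ?z81 ?z82 ?z83 ?z64 ?z65 ?z74 ?z75 ?z84 ?z85; ring.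
have z87 : m 8 7 = 0 by apply: (zk1 (k:=1) (oner_neq0 _) E167); rewrite ?z41 ?z42 ?z43 ?z51 ?z52 ?z53 ?z61 ?z62 ?z63 ?z71 ?z72 ?z73 ?z81 ?z82 ?z83 ?z64 ?z65 ?z74 ?z75 ?z84 ?z85 ?z86; ring.
have e124b : -((m 1 1)*(m 2 3)) + (m 1 3)*(m 2 1) = 0 by apply: (eq_sub E124); rewrite ?z41 ?z42 ?z43 ?z51 ?z52 ?z53 ?z61 ?z62 ?z63 ?z71 ?z72 ?z73 ?z81 ?z82 ?z83 ?z64 ?z65 ?z74 ?z75 ?z84 ?z85 ?z86 ?z87; ring.
have e125b : -((m 1 2)*(m 2 3)) + (m 1 3)*(m 2 2) = 0 by apply: (eq_sub E125); rewrite ?z41 ?z42 ?z43 ?z51 ?z52 ?z53 ?z61 ?z62 ?z63 ?z71 ?z72 ?z73 ?z81 ?z82 ?z83 ?z64 ?z65 ?z74 ?z75 ?z84 ?z85 ?z86 ?z87; ring.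
have e134b : -((m 1 1)*(m 3 3)) + (m 1 3)*(m 3 1) + (m 4 4) = 0 by apply: (eq_sub E134); rewrite ?z41 ?z42 ?z43 ?z51 ?z52 ?z53 ?z61 ?z62 ?z63 ?z71 ?z72 ?z73 ?z81 ?z82 ?z83 ?z64 ?z65 ?z74 ?z75 ?z84 ?z85 ?z86 ?z87; ring.
have e135b : -((m 1 2)*(m 3 3)) + (m 1 3)*(m 3 2) + (m 4 5) = 0 by apply: (eq_sub E135); rewrite ?z41 ?z42 ?z43 ?z51 ?z52 ?z53 ?z61 ?z62 ?z63 ?z71 ?z72 ?z73 ?z81 ?z82 ?z83 ?z64 ?z65 ?z74 ?z75 ?z84 ?z85 ?z86 ?z87; ring.
have e234b : -((m 2 1)*(m 3 3)) + (m 2 3)*(m 3 1) + (m 5 4) = 0 by apply: (eq_sub E234); rewrite ?z41 ?z42 ?z43 ?z51 ?z52 ?z53 ?z61 ?z62 ?z63 ?z71 ?z72 ?z73 ?z81 ?z82 ?z83 ?z64 ?z65 ?z74 ?z75 ?z84 ?z85 ?z86 ?z87; ring.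
have e235b : -((m 2 2)*(m 3 3)) + (m 2 3)*(m 3 2) + (m 5 5) = 0 by apply: (eq_sub E235); rewrite ?z41 ?z42 ?z43 ?z51 ?z52 ?z53 ?z61 ?z62 ?z63 ?z71 ?z72 ?z73 ?z81 ?z82 ?z83 ?z64 ?z65 ?z74 ?z75 ?z84 ?z85 ?z86 ?z87; ring.
have e458b : 2*(m 4 4)*(m 5 5) + (-2)*(m 4 5)*(m 5 4) + (-2)*(m 8 8) = 0 by apply: (eq_sub E458); rewrite ?z41 ?z42 ?z43 ?z51 ?z52 ?z53 ?z61 ?z62 ?z63 ?z71 ?z72 ?z73 ?z81 ?z82 ?z83 ?z64 ?z65 ?z74 ?z75 ?z84 ?z85 ?z86 ?z87; ring.
have h44 : m 4 4 = m 1 1 * m 3 3 - m 1 3 * m 3 1 by apply: (lk1 (k:=1) (k1:=1) (oner_neq0 _) e134b); ring.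
have h45 : m 4 5 = m 1 2 * m 3 3 - m 1 3 * m 3 2 by apply: (lk1 (k:=1) (k1:=1) (oner_neq0 _) e135b); ring.
have h54 : m 5 4 = m 2 1 * m 3 3 - m 2 3 * m 3 1 by apply: (lk1 (k:=1) (k1:=1) (oner_neq0 _) e234b); ring.
have h55 : m 5 5 = m 2 2 * m 3 3 - m 2 3 * m 3 2 by apply: (lk1 (k:=1) (k1:=1) (oner_neq0 _) e235b); ring.
have h88 : m 8 8 = m 4 4 * m 5 5 - m 4 5 * m 5 4 by apply: (lk1 (k:=-2) (k1:=1) nm2 e458b); ring.
have hnn : m 8 8 * n 8 8 = 1 by rewrite -hinv z81 z82 z83 z84 z85 z86 z87; ring.
have cnz : m 8 8 != 0.
  by apply/eqP => h; move: hnn; rewrite h mul0r => /eqP; rewrite eq_sym oner_eq0.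
have hc : m 8 8 = m 3 3 ^+ 2 * (m 1 1 * m 2 2 - m 1 2 * m 2 1).
  apply: (lk2 (k:=1) (k1:= m 3 3 * m 3 2) (k2 := - (m 3 3 * m 3 1)) (oner_neq0 _) e124b e125b).
  by rewrite h88 h44 h45 h54 h55; ring.
have dnz : m 1 1 * m 2 2 - m 1 2 * m 2 1 != 0.
  by move: cnz; rewrite hc mulf_eq0 negb_or => /andP[].
have snz : m 3 3 != 0.
  by move: cnz; rewrite hc mulf_eq0 negb_or sqrf_eq0 => /andP[].
have z13 : m 1 3 = 0.
  by apply: (zmul2 (k1 := - m 1 2) (k2 := m 1 1) dnz e124b e125b); ring.
have z23 : m 2 3 = 0.
  by apply: (zmul2 (k1 := - m 2 2) (k2 := m 2 1) dnz e124b e125b); ring.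
have e134 : -((m 1 1)*(m 3 3)) + (m 4 4) = 0 by apply: (eq_sub E134); rewrite ?z41 ?z42 ?z43 ?z51 ?z52 ?z53 ?z61 ?z62 ?z63 ?z71 ?z72 ?z73 ?z81 ?z82 ?z83 ?z64 ?z65 ?z74 ?z75 ?z84 ?z85 ?z86 ?z87 ?z13 ?z23; ring.
have e135 : -((m 1 2)*(m 3 3)) + (m 4 5) = 0 by apply: (eq_sub E135); rewrite ?z41 ?z42 ?z43 ?z51 ?z52 ?z53 ?z61 ?z62 ?z63 ?z71 ?z72 ?z73 ?z81 ?z82 ?z83 ?z64 ?z65 ?z74 ?z75 ?z84 ?z85 ?z86 ?z87 ?z13 ?z23; ring.
have e234 : -((m 2 1)*(m 3 3)) + (m 5 4) = 0 by apply: (eq_sub E234); rewrite ?z41 ?z42 ?z43 ?z51 ?z52 ?z53 ?z61 ?z62 ?z63 ?z71 ?z72 ?z73 ?z81 ?z82 ?z83 ?z64 ?z65 ?z74 ?z75 ?z84 ?z85 ?z86 ?z87 ?z13 ?z23; ring.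
have e235 : -((m 2 2)*(m 3 3)) + (m 5 5) = 0 by apply: (eq_sub E235); rewrite ?z41 ?z42 ?z43 ?z51 ?z52 ?z53 ?z61 ?z62 ?z63 ?z71 ?z72 ?z73 ?z81 ?z82 ?z83 ?z64 ?z65 ?z74 ?z75 ?z84 ?z85 ?z86 ?z87 ?z13 ?z23; ring.
have e168 : -((m 1 1)*(m 6 6)) + -((m 1 2)*(m 6 7)) + (m 8 8) = 0 by apply: (eq_sub E168); rewrite ?z41 ?z42 ?z43 ?z51 ?z52 ?z53 ?z61 ?z62 ?z63 ?z71 ?z72 ?z73 ?z81 ?z82 ?z83 ?z64 ?z65 ?z74 ?z75 ?z84 ?z85 ?z86 ?z87 ?z13 ?z23; ring.
have e178 : -((m 1 1)*(m 7 6)) + -((m 1 2)*(m 7 7)) = 0 by apply: (eq_sub E178); rewrite ?z41 ?z42 ?z43 ?z51 ?z52 ?z53 ?z61 ?z62 ?z63 ?z71 ?z72 ?z73 ?z81 ?z82 ?z83 ?z64 ?z65 ?z74 ?z75 ?z84 ?z85 ?z86 ?z87 ?z13 ?z23; ring.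
have e268 : -((m 2 1)*(m 6 6)) + -((m 2 2)*(m 6 7)) = 0 by apply: (eq_sub E268); rewrite ?z41 ?z42 ?z43 ?z51 ?z52 ?z53 ?z61 ?z62 ?z63 ?z71 ?z72 ?z73 ?z81 ?z82 ?z83 ?z64 ?z65 ?z74 ?z75 ?z84 ?z85 ?z86 ?z87 ?z13 ?z23; ring.
have e278 : -((m 2 1)*(m 7 6)) + -((m 2 2)*(m 7 7)) + (m 8 8) = 0 by apply: (eq_sub E278); rewrite ?z41 ?z42 ?z43 ?z51 ?z52 ?z53 ?z61 ?z62 ?z63 ?z71 ?z72 ?z73 ?z81 ?z82 ?z83 ?z64 ?z65 ?z74 ?z75 ?z84 ?z85 ?z86 ?z87 ?z13 ?z23; ring.
have e368 : -((m 3 1)*(m 6 6)) + -((m 3 2)*(m 6 7)) = 0 by apply: (eq_sub E368); rewrite ?z41 ?z42 ?z43 ?z51 ?z52 ?z53 ?z61 ?z62 ?z63 ?z71 ?z72 ?z73 ?z81 ?z82 ?z83 ?z64 ?z65 ?z74 ?z75 ?z84 ?z85 ?z86 ?z87 ?z13 ?z23; ring.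
have e378 : -((m 3 1)*(m 7 6)) + -((m 3 2)*(m 7 7)) = 0 by apply: (eq_sub E378); rewrite ?z41 ?z42 ?z43 ?z51 ?z52 ?z53 ?z61 ?z62 ?z63 ?z71 ?z72 ?z73 ?z81 ?z82 ?z83 ?z64 ?z65 ?z74 ?z75 ?z84 ?z85 ?z86 ?z87 ?z13 ?z23; ring.
have e346 : (-3)*(m 3 1)*(m 4 4) + -((m 3 2)*(m 4 5)) + 2*(m 3 3)*(m 4 5) + 2*(m 7 6) = 0 by apply: (eq_sub E346); rewrite ?z41 ?z42 ?z43 ?z51 ?z52 ?z53 ?z61 ?z62 ?z63 ?z71 ?z72 ?z73 ?z81 ?z82 ?z83 ?z64 ?z65 ?z74 ?z75 ?z84 ?z85 ?z86 ?z87 ?z13 ?z23; ring.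
have e347 : -((m 3 1)*(m 4 5)) + -((m 3 2)*(m 4 4)) + (-2)*(m 3 3)*(m 4 4) + 2*(m 7 7) = 0 by apply: (eq_sub E347); rewrite ?z41 ?z42 ?z43 ?z51 ?z52 ?z53 ?z61 ?z62 ?z63 ?z71 ?z72 ?z73 ?z81 ?z82 ?z83 ?z64 ?z65 ?z74 ?z75 ?z84 ?z85 ?z86 ?z87 ?z13 ?z23; ring.
have e356 : (-3)*(m 3 1)*(m 5 4) + -((m 3 2)*(m 5 5)) + 2*(m 3 3)*(m 5 5) + (-2)*(m 6 6) = 0 by apply: (eq_sub E356); rewrite ?z41 ?z42 ?z43 ?z51 ?z52 ?z53 ?z61 ?z62 ?z63 ?z71 ?z72 ?z73 ?z81 ?z82 ?z83 ?z64 ?z65 ?z74 ?z75 ?z84 ?z85 ?z86 ?z87 ?z13 ?z23; ring.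
have e357 : -((m 3 1)*(m 5 5)) + -((m 3 2)*(m 5 4)) + (-2)*(m 3 3)*(m 5 4) + (-2)*(m 6 7) = 0 by apply: (eq_sub E357); rewrite ?z41 ?z42 ?z43 ?z51 ?z52 ?z53 ?z61 ?z62 ?z63 ?z71 ?z72 ?z73 ?z81 ?z82 ?z83 ?z64 ?z65 ?z74 ?z75 ?z84 ?z85 ?z86 ?z87 ?z13 ?z23; ring.
have e256 : (-3)*(m 2 1)*(m 5 4) + -((m 2 2)*(m 5 5)) + (m 6 6) = 0 by apply: (eq_sub E256); rewrite ?z41 ?z42 ?z43 ?z51 ?z52 ?z53 ?z61 ?z62 ?z63 ?z71 ?z72 ?z73 ?z81 ?z82 ?z83 ?z64 ?z65 ?z74 ?z75 ?z84 ?z85 ?z86 ?z87 ?z13 ?z23; ring.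
have e257 : -((m 2 1)*(m 5 5)) + -((m 2 2)*(m 5 4)) + (m 6 7) = 0 by apply: (eq_sub E257); rewrite ?z41 ?z42 ?z43 ?z51 ?z52 ?z53 ?z61 ?z62 ?z63 ?z71 ?z72 ?z73 ?z81 ?z82 ?z83 ?z64 ?z65 ?z74 ?z75 ?z84 ?z85 ?z86 ?z87 ?z13 ?z23; ring.
have e146 : (-3)*(m 1 1)*(m 4 4) + -((m 1 2)*(m 4 5)) + 3*(m 6 6) = 0 by apply: (eq_sub E146); rewrite ?z41 ?z42 ?z43 ?z51 ?z52 ?z53 ?z61 ?z62 ?z63 ?z71 ?z72 ?z73 ?z81 ?z82 ?z83 ?z64 ?z65 ?z74 ?z75 ?z84 ?z85 ?z86 ?z87 ?z13 ?z23; ring.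
have e147 : -((m 1 1)*(m 4 5)) + -((m 1 2)*(m 4 4)) + 3*(m 6 7) = 0 by apply: (eq_sub E147); rewrite ?z41 ?z42 ?z43 ?z51 ?z52 ?z53 ?z61 ?z62 ?z63 ?z71 ?z72 ?z73 ?z81 ?z82 ?z83 ?z64 ?z65 ?z74 ?z75 ?z84 ?z85 ?z86 ?z87 ?z13 ?z23; ring.
have e126 : 2*a*(m 7 6) + (-3)*(m 1 1)*(m 2 4) + -((m 1 2)*(m 2 5)) + 3*(m 1 4)*(m 2 1) + (m 1 5)*(m 2 2) = 0 by apply: (eq_sub E126); rewrite ?z41 ?z42 ?z43 ?z51 ?z52 ?z53 ?z61 ?z62 ?z63 ?z71 ?z72 ?z73 ?z81 ?z82 ?z83 ?z64 ?z65 ?z74 ?z75 ?z84 ?z85 ?z86 ?z87 ?z13 ?z23; ring.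
have e136 : (-3)*(m 1 1)*(m 3 4) + -((m 1 2)*(m 3 5)) + 3*(m 1 4)*(m 3 1) + (m 1 5)*(m 3 2) + (-2)*(m 1 5)*(m 3 3) + (m 4 6) = 0 by apply: (eq_sub E136); rewrite ?z41 ?z42 ?z43 ?z51 ?z52 ?z53 ?z61 ?z62 ?z63 ?z71 ?z72 ?z73 ?z81 ?z82 ?z83 ?z64 ?z65 ?z74 ?z75 ?z84 ?z85 ?z86 ?z87 ?z13 ?z23; ring.
have e358 : 2*(m 3 1)*(m 5 4) + -((m 3 1)*(m 5 6)) + 2*(m 3 2)*(m 5 5) + -((m 3 2)*(m 5 7)) + 2*(m 3 4)*(m 5 5) + (-2)*(m 3 5)*(m 5 4) + (-2)*(m 6 8) = 0 by apply: (eq_sub E358); rewrite ?z41 ?z42 ?z43 ?z51 ?z52 ?z53 ?z61 ?z62 ?z63 ?z71 ?z72 ?z73 ?z81 ?z82 ?z83 ?z64 ?z65 ?z74 ?z75 ?z84 ?z85 ?z86 ?z87 ?z13 ?z23; ring.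
have e148 : 2*(m 1 1)*(m 4 4) + -((m 1 1)*(m 4 6)) + 2*(m 1 2)*(m 4 5) + -((m 1 2)*(m 4 7)) + 2*(m 1 4)*(m 4 5) + (-2)*(m 1 5)*(m 4 4) + 3*(m 6 8) + (-2)*(m 8 8) = 0 by apply: (eq_sub E148); rewrite ?z41 ?z42 ?z43 ?z51 ?z52 ?z53 ?z61 ?z62 ?z63 ?z71 ?z72 ?z73 ?z81 ?z82 ?z83 ?z64 ?z65 ?z74 ?z75 ?z84 ?z85 ?z86 ?z87 ?z13 ?z23; ring.
have e237 : (-2)*b*(m 2 1)*(m 3 2) + 2*b*(m 2 2)*(m 3 1) + -((m 2 1)*(m 3 5)) + -((m 2 2)*(m 3 4)) + (m 2 4)*(m 3 2) + 2*(m 2 4)*(m 3 3) + (m 2 5)*(m 3 1) + (m 5 7) = 0 by apply: (eq_sub E237); rewrite ?z41 ?z42 ?z43 ?z51 ?z52 ?z53 ?z61 ?z62 ?z63 ?z71 ?z72 ?z73 ?z81 ?z82 ?z83 ?z64 ?z65 ?z74 ?z75 ?z84 ?z85 ?z86 ?z87 ?z13 ?z23; ring.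
have e258 : 2*(m 2 1)*(m 5 4) + -((m 2 1)*(m 5 6)) + 2*(m 2 2)*(m 5 5) + -((m 2 2)*(m 5 7)) + 2*(m 2 4)*(m 5 5) + (-2)*(m 2 5)*(m 5 4) + (m 6 8) + (-2)*(m 8 8) = 0 by apply: (eq_sub E258); rewrite ?z41 ?z42 ?z43 ?z51 ?z52 ?z53 ?z61 ?z62 ?z63 ?z71 ?z72 ?z73 ?z81 ?z82 ?z83 ?z64 ?z65 ?z74 ?z75 ?z84 ?z85 ?z86 ?z87 ?z13 ?z23; ring.
have e137 : (-2)*b*(m 1 1)*(m 3 2) + 2*b*(m 1 2)*(m 3 1) + -((m 1 1)*(m 3 5)) + -((m 1 2)*(m 3 4)) + (m 1 4)*(m 3 2) + 2*(m 1 4)*(m 3 3) + (m 1 5)*(m 3 1) + (m 4 7) = 0 by apply: (eq_sub E137); rewrite ?z41 ?z42 ?z43 ?z51 ?z52 ?z53 ?z61 ?z62 ?z63 ?z71 ?z72 ?z73 ?z81 ?z82 ?z83 ?z64 ?z65 ?z74 ?z75 ?z84 ?z85 ?z86 ?z87 ?z13 ?z23; ring.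
have e348 : 2*(m 3 1)*(m 4 4) + -((m 3 1)*(m 4 6)) + 2*(m 3 2)*(m 4 5) + -((m 3 2)*(m 4 7)) + 2*(m 3 4)*(m 4 5) + (-2)*(m 3 5)*(m 4 4) + 2*(m 7 8) = 0 by apply: (eq_sub E348); rewrite ?z41 ?z42 ?z43 ?z51 ?z52 ?z53 ?z61 ?z62 ?z63 ?z71 ?z72 ?z73 ?z81 ?z82 ?z83 ?z64 ?z65 ?z74 ?z75 ?z84 ?z85 ?z86 ?z87 ?z13 ?z23; ring.
have e248 : 2*(m 2 1)*(m 4 4) + -((m 2 1)*(m 4 6)) + 2*(m 2 2)*(m 4 5) + -((m 2 2)*(m 4 7)) + 2*(m 2 4)*(m 4 5) + (-2)*(m 2 5)*(m 4 4) + (m 7 8) = 0 by apply: (eq_sub E248); rewrite ?z41 ?z42 ?z43 ?z51 ?z52 ?z53 ?z61 ?z62 ?z63 ?z71 ?z72 ?z73 ?z81 ?z82 ?z83 ?z64 ?z65 ?z74 ?z75 ?z84 ?z85 ?z86 ?z87 ?z13 ?z23; ring.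
have e127 : 2*a*(m 7 7) + (-2)*b*(m 1 1)*(m 2 2) + 2*b*(m 1 2)*(m 2 1) + -((m 1 1)*(m 2 5)) + -((m 1 2)*(m 2 4)) + (m 1 4)*(m 2 2) + (m 1 5)*(m 2 1) = 0 by apply: (eq_sub E127); rewrite ?z41 ?z42 ?z43 ?z51 ?z52 ?z53 ?z61 ?z62 ?z63 ?z71 ?z72 ?z73 ?z81 ?z82 ?z83 ?z64 ?z65 ?z74 ?z75 ?z84 ?z85 ?z86 ?z87 ?z13 ?z23; ring.
have h44' : m 4 4 = m 1 1 * m 3 3 by apply: (lk1 (k:=1) (k1:=1) (oner_neq0 _) e134); ring.
have h45' : m 4 5 = m 1 2 * m 3 3 by apply: (lk1 (k:=1) (k1:=1) (oner_neq0 _) e135); ring.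
have h54' : m 5 4 = m 2 1 * m 3 3 by apply: (lk1 (k:=1) (k1:=1) (oner_neq0 _) e234); ring.
have h55' : m 5 5 = m 2 2 * m 3 3 by apply: (lk1 (k:=1) (k1:=1) (oner_neq0 _) e235); ring.
have h168 : m 8 8 = m 1 1 * m 6 6 + m 1 2 * m 6 7 by apply: (lk1 (k:=1) (k1:=1) (oner_neq0 _) e168); ring.
have h278 : m 8 8 = m 2 1 * m 7 6 + m 2 2 * m 7 7 by apply: (lk1 (k:=1) (k1:=1) (oner_neq0 _) e278); ring.
have f178 : m 1 1 * m 7 6 + m 1 2 * m 7 7 = 0 by apply: (lk1 (k:=1) (k1:=-1) (oner_neq0 _) e178); ring.
have f268 : m 2 1 * m 6 6 + m 2 2 * m 6 7 = 0 by apply: (lk1 (k:=1) (k1:=-1) (oner_neq0 _) e268); ring.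
have hdet : (m 1 1 * m 2 2 - m 1 2 * m 2 1) * (m 6 6 * m 7 7 - m 6 7 * m 7 6) =
   (m 1 1 * m 6 6 + m 1 2 * m 6 7) * (m 2 1 * m 7 6 + m 2 2 * m 7 7)
   - (m 1 1 * m 7 6 + m 1 2 * m 7 7) * (m 2 1 * m 6 6 + m 2 2 * m 6 7) by ring.
rewrite -h168 -h278 f178 f268 mul0r subr0 in hdet.
have Mnz : m 6 6 * m 7 7 - m 6 7 * m 7 6 != 0.
  by apply/eqP => h; move: hdet; rewrite h mulr0 => /esym/eqP; rewrite mulf_eq0 orbb (negbTE cnz).
have z31 : m 3 1 = 0.
  by apply: (zmul2 (k1 := - m 7 7) (k2 := m 6 7) Mnz e368 e378); ring.
have z32 : m 3 2 = 0.
  by apply: (zmul2 (k1 := m 7 6) (k2 := - m 6 6) Mnz e368 e378); ring.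
have h76 : m 7 6 = - (m 3 3 * m 4 5) by apply: (lk1 (k:=2) (k1:=1) n2 e346); rewrite z31 z32; ring.
have h77 : m 7 7 = m 3 3 * m 4 4 by apply: (lk1 (k:=2) (k1:=1) n2 e347); rewrite z31 z32; ring.
have h66 : m 6 6 = m 3 3 * m 5 5 by apply: (lk1 (k:=-2) (k1:=1) nm2 e356); rewrite z31 z32; ring.
have h67 : m 6 7 = - (m 3 3 * m 5 4) by apply: (lk1 (k:=-2) (k1:=1) nm2 e357); rewrite z31 z32; ring.
have hi : m 3 3 * m 2 2 = 3 * m 2 1 ^+ 2 + m 2 2 ^+ 2.
  by apply: (lk1 (k:=m 3 3) (k1:=1) snz e256); rewrite h66 h54' h55'; ring.
have hii : - (m 3 3 * m 2 1) = 2 * m 2 1 * m 2 2.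
  by apply: (lk1 (k:=m 3 3) (k1:=1) snz e257); rewrite h67 h54' h55'; ring.
have z21 : m 2 1 = 0.
  have hf : m 2 1 * (m 3 3 + 2 * m 2 2) = 0.
    by apply: (lk1 (k:=1) (k1:=-1) (oner_neq0 _) (sub0 hii)); ring.
  move/eqP: hf; rewrite mulf_eq0 => /orP[/eqP // | /eqP hs].
  have hsq : 3 * (m 2 1 ^+ 2 + m 2 2 ^+ 2) = 0.
    by apply: (lk2 (k:=1) (k1:=-1) (k2:=m 2 2) (oner_neq0 _) (sub0 hi) hs); ring.
  move/eqP: hsq; rewrite mulf_eq0 (negbTE n3) /= paddr_eq0 ?sqr_ge0 // sqrf_eq0.
  by case/andP => /eqP.
have dnz' : m 1 1 * m 2 2 != 0 by move: dnz; rewrite z21 mulr0 subr0.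
move: (dnz'); rewrite mulf_eq0 negb_or => /andP[n11 n22].
have h22 : m 2 2 = m 3 3.
  by apply/esym; apply: (lk1 (k:=m 2 2) (k1:=1) n22 (sub0 hi)); rewrite z21; ring.
have z12 : m 1 2 = 0.
  apply: (zk1 (k:= m 1 1 * m 3 3 * (-2)) _ e147).
    by rewrite mulf_neq0 ?nm2 // mulf_neq0.
  by rewrite h45' h44' h67 h54' z21; ring.
have hq : m 3 3 ^+ 2 = m 1 1 ^+ 2.
  by apply: (lk1 (k:=3 * m 3 3) (k1:=1) (mulf_neq0 n3 snz) e146); rewrite h44' h45' h66 h55' h22 z12; ring.
have h15 : m 3 3 * m 1 5 = 3 * m 1 1 * m 2 4.
  by apply: (lk1 (k:=1) (k1:=1) (oner_neq0 _) e126); rewrite h76 h45' z12 z21 h22; ring.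
have h46 : m 4 6 = 3 * m 1 1 * m 3 4 + 2 * m 1 5 * m 3 3.
  by apply: (lk1 (k:=1) (k1:=1) (oner_neq0 _) e136); rewrite z12 z31 z32; ring.
have h68 : m 6 8 = m 3 4 * m 3 3 ^+ 2.
  by apply: (lk1 (k:=-2) (k1:=1) nm2 e358); rewrite z31 z32 h55' h54' z21 h22; ring.
have h57 : m 5 7 = m 3 3 * m 3 4 - 2 * m 2 4 * m 3 3.
  by apply: (lk1 (k:=1) (k1:=1) (oner_neq0 _) e237); rewrite z21 z31 z32 h22; ring.
have X2 : m 3 3 + 2 * m 2 4 = m 3 3 * m 1 1.
  apply: (lk1 (k:=2 * m 3 3 ^+ 2) (k1:=1) _ e258).
    by apply: mulf_neq0; [exact: n2 | rewrite sqrf_eq0].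
  by rewrite h55' h57 h68 hc h54' z12 z21 h22; ring.
have X3 : m 3 3 - 6 * m 2 4 = m 3 3 * m 1 1.
  apply: (lk3 (k:=2 * m 3 3 ^+ 2) (k1:=1) (k2 := 2 * m 3 3 - 3 * m 3 4 - 12 * m 2 4) (k3 := 4 * m 1 1) _ e148 (sub0 hq) (sub0 h15)).
    by apply: mulf_neq0; [exact: n2 | rewrite sqrf_eq0].
  by rewrite h44' h46 h45' z12 h68 hc z21 h22; ring.
have z24 : m 2 4 = 0.
  by apply: (lk2 (k:=8) (k1:=1) (k2:=-1) n8 (sub0 X2) (sub0 X3)); ring.
have h11 : m 1 1 = 1.
  by apply: (lk1 (k:=m 3 3) (k1:=-1) snz (sub0 X2)); rewrite z24; ring.
have hs2 : m 3 3 ^+ 2 = 1 by rewrite hq h11 expr1n.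
have h47 : m 4 7 = m 3 5 - 2 * m 3 3 * m 1 4.
  by apply: (lk1 (k:=1) (k1:=1) (oner_neq0 _) e137); rewrite z31 z32 z12 h11; ring.
have h78 : m 7 8 = m 3 3 * m 3 5.
  by apply: (lk1 (k:=2) (k1:=1) n2 e348); rewrite z31 z32 h44' h45' z12 h11; ring.
have h25 : m 2 5 = m 3 3 * m 1 4.
  by apply: (lk1 (k:=2 * m 3 3) (k1:=-1) (mulf_neq0 n2 snz) e248); rewrite z21 h45' z12 h44' h11 h47 h78 h22 z24; ring.
have hab : a * m 3 3 = b.
  by apply: (lk1 (k:=2 * m 3 3) (k1:=1) (mulf_neq0 n2 snz) e127); rewrite h77 h44' h11 h22 z12 z21 h25; ring.
have : (m 3 3 - 1) * (m 3 3 + 1) = 0 by rewrite -subr_sqr hs2 expr1n subrr.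
move/eqP; rewrite mulf_eq0 => /orP[/eqP hs | /eqP hs].
  have hs1 : m 3 3 = 1 by apply/eqP; rewrite -subr_eq0 hs.
  by rewrite hs1 mulr1 in hab.
have hs' : m 3 3 = -1 by apply/eqP; rewrite -(subr_eq0 _ (-1)) opprK hs.
rewrite hs' mulrN1 in hab.
lra.
Qed.

Lemma eq_raw (L Rr P : R) : L = Rr -> P = Rr - L -> P = 0.
Proof. by move=> -> ->; rewrite subrr. Qed.

Lemma iso_part (a b : R) : 0 <= a -> 0 <= b -> lie_isomorphic (gbr a) (gbr b) -> a = b.
Proof.
move=> a0 b0 [A [Au H]].
have HE : forall i j k, cd (gbr a (ev i) (ev j) *m A) k = cd (gbr b (ev i *m A) (ev j *m A)) k.
  by move=> i j k; rewrite H.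
apply: (key (m := ent A) (n := ent (invmx A)) a0 b0).
  by have := ent_mul A (invmx A) 8 8; rewrite mulmxV // ent_scal //= => <-.
- apply: (eq_raw (HE 1 3 1)); rewrite coord_mul !cd_gbr // /dform /= /e2 !cd_ev // ?cd_evA /=; ring.
- apply: (eq_raw (HE 1 3 2)); rewrite coord_mul !cd_gbr // /dform /= /e2 !cd_ev // ?cd_evA /=; ring.
- apply: (eq_raw (HE 1 3 3)); rewrite coord_mul !cd_gbr // /dform /= /e2 !cd_ev // ?cd_evA /=; ring.
- apply: (eq_raw (HE 2 3 1)); rewrite coord_mul !cd_gbr // /dform /= /e2 !cd_ev // ?cd_evA /=; ring.
- apply: (eq_raw (HE 2 3 2)); rewrite coord_mul !cd_gbr // /dform /= /e2 !cd_ev // ?cd_evA /=; ring.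
- apply: (eq_raw (HE 2 3 3)); rewrite coord_mul !cd_gbr // /dform /= /e2 !cd_ev // ?cd_evA /=; ring.
- apply: (eq_raw (HE 3 5 1)); rewrite coord_mul !cd_gbr // /dform /= /e2 !cd_ev // ?cd_evA /=; ring.
- apply: (eq_raw (HE 3 5 2)); rewrite coord_mul !cd_gbr // /dform /= /e2 !cd_ev // ?cd_evA /=; ring.
- apply: (eq_raw (HE 3 5 3)); rewrite coord_mul !cd_gbr // /dform /= /e2 !cd_ev // ?cd_evA /=; ring.
- apply: (eq_raw (HE 1 5 1)); rewrite coord_mul !cd_gbr // /dform /= /e2 !cd_ev // ?cd_evA /=; ring.
- apply: (eq_raw (HE 1 5 2)); rewrite coord_mul !cd_gbr // /dform /= /e2 !cd_ev // ?cd_evA /=; ring.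
- apply: (eq_raw (HE 1 5 3)); rewrite coord_mul !cd_gbr // /dform /= /e2 !cd_ev // ?cd_evA /=; ring.
- apply: (eq_raw (HE 1 6 1)); rewrite coord_mul !cd_gbr // /dform /= /e2 !cd_ev // ?cd_evA /=; ring.
- apply: (eq_raw (HE 1 6 2)); rewrite coord_mul !cd_gbr // /dform /= /e2 !cd_ev // ?cd_evA /=; ring.
- apply: (eq_raw (HE 1 6 3)); rewrite coord_mul !cd_gbr // /dform /= /e2 !cd_ev // ?cd_evA /=; ring.
- apply: (eq_raw (HE 3 5 4)); rewrite coord_mul !cd_gbr // /dform /= /e2 !cd_ev // ?cd_evA /=; ring.
- apply: (eq_raw (HE 3 5 5)); rewrite coord_mul !cd_gbr // /dform /= /e2 !cd_ev // ?cd_evA /=; ring.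
- apply: (eq_raw (HE 1 5 4)); rewrite coord_mul !cd_gbr // /dform /= /e2 !cd_ev // ?cd_evA /=; ring.
- apply: (eq_raw (HE 1 5 5)); rewrite coord_mul !cd_gbr // /dform /= /e2 !cd_ev // ?cd_evA /=; ring.
- apply: (eq_raw (HE 1 6 4)); rewrite coord_mul !cd_gbr // /dform /= /e2 !cd_ev // ?cd_evA /=; ring.
- apply: (eq_raw (HE 1 6 5)); rewrite coord_mul !cd_gbr // /dform /= /e2 !cd_ev // ?cd_evA /=; ring.
- apply: (eq_raw (HE 1 6 6)); rewrite coord_mul !cd_gbr // /dform /= /e2 !cd_ev // ?cd_evA /=; ring.
- apply: (eq_raw (HE 1 6 7)); rewrite coord_mul !cd_gbr // /dform /= /e2 !cd_ev // ?cd_evA /=; ring.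
- apply: (eq_raw (HE 1 2 4)); rewrite coord_mul !cd_gbr // /dform /= /e2 !cd_ev // ?cd_evA /=; ring.
- apply: (eq_raw (HE 1 2 5)); rewrite coord_mul !cd_gbr // /dform /= /e2 !cd_ev // ?cd_evA /=; ring.
- apply: (eq_raw (HE 1 3 4)); rewrite coord_mul !cd_gbr // /dform /= /e2 !cd_ev // ?cd_evA /=; ring.
- apply: (eq_raw (HE 1 3 5)); rewrite coord_mul !cd_gbr // /dform /= /e2 !cd_ev // ?cd_evA /=; ring.
- apply: (eq_raw (HE 2 3 4)); rewrite coord_mul !cd_gbr // /dform /= /e2 !cd_ev // ?cd_evA /=; ring.
- apply: (eq_raw (HE 2 3 5)); rewrite coord_mul !cd_gbr // /dform /= /e2 !cd_ev // ?cd_evA /=; ring.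
- apply: (eq_raw (HE 4 5 8)); rewrite coord_mul !cd_gbr // /dform /= /e2 !cd_ev // ?cd_evA /=; ring.
- apply: (eq_raw (HE 1 6 8)); rewrite coord_mul !cd_gbr // /dform /= /e2 !cd_ev // ?cd_evA /=; ring.
- apply: (eq_raw (HE 1 7 8)); rewrite coord_mul !cd_gbr // /dform /= /e2 !cd_ev // ?cd_evA /=; ring.
- apply: (eq_raw (HE 2 6 8)); rewrite coord_mul !cd_gbr // /dform /= /e2 !cd_ev // ?cd_evA /=; ring.
- apply: (eq_raw (HE 2 7 8)); rewrite coord_mul !cd_gbr // /dform /= /e2 !cd_ev // ?cd_evA /=; ring.
- apply: (eq_raw (HE 3 6 8)); rewrite coord_mul !cd_gbr // /dform /= /e2 !cd_ev // ?cd_evA /=; ring.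
- apply: (eq_raw (HE 3 7 8)); rewrite coord_mul !cd_gbr // /dform /= /e2 !cd_ev // ?cd_evA /=; ring.
- apply: (eq_raw (HE 3 4 6)); rewrite coord_mul !cd_gbr // /dform /= /e2 !cd_ev // ?cd_evA /=; ring.
- apply: (eq_raw (HE 3 4 7)); rewrite coord_mul !cd_gbr // /dform /= /e2 !cd_ev // ?cd_evA /=; ring.
- apply: (eq_raw (HE 3 5 6)); rewrite coord_mul !cd_gbr // /dform /= /e2 !cd_ev // ?cd_evA /=; ring.
- apply: (eq_raw (HE 3 5 7)); rewrite coord_mul !cd_gbr // /dform /= /e2 !cd_ev // ?cd_evA /=; ring.
- apply: (eq_raw (HE 2 5 6)); rewrite coord_mul !cd_gbr // /dform /= /e2 !cd_ev // ?cd_evA /=; ring.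
- apply: (eq_raw (HE 2 5 7)); rewrite coord_mul !cd_gbr // /dform /= /e2 !cd_ev // ?cd_evA /=; ring.
- apply: (eq_raw (HE 1 4 6)); rewrite coord_mul !cd_gbr // /dform /= /e2 !cd_ev // ?cd_evA /=; ring.
- apply: (eq_raw (HE 1 4 7)); rewrite coord_mul !cd_gbr // /dform /= /e2 !cd_ev // ?cd_evA /=; ring.
- apply: (eq_raw (HE 1 2 6)); rewrite coord_mul !cd_gbr // /dform /= /e2 !cd_ev // ?cd_evA /=; ring.
- apply: (eq_raw (HE 1 3 6)); rewrite coord_mul !cd_gbr // /dform /= /e2 !cd_ev // ?cd_evA /=; ring.
- apply: (eq_raw (HE 3 5 8)); rewrite coord_mul !cd_gbr // /dform /= /e2 !cd_ev // ?cd_evA /=; ring.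
- apply: (eq_raw (HE 1 4 8)); rewrite coord_mul !cd_gbr // /dform /= /e2 !cd_ev // ?cd_evA /=; ring.
- apply: (eq_raw (HE 2 3 7)); rewrite coord_mul !cd_gbr // /dform /= /e2 !cd_ev // ?cd_evA /=; ring.
- apply: (eq_raw (HE 2 5 8)); rewrite coord_mul !cd_gbr // /dform /= /e2 !cd_ev // ?cd_evA /=; ring.
- apply: (eq_raw (HE 1 3 7)); rewrite coord_mul !cd_gbr // /dform /= /e2 !cd_ev // ?cd_evA /=; ring.
- apply: (eq_raw (HE 3 4 8)); rewrite coord_mul !cd_gbr // /dform /= /e2 !cd_ev // ?cd_evA /=; ring.
- apply: (eq_raw (HE 2 4 8)); rewrite coord_mul !cd_gbr // /dform /= /e2 !cd_ev // ?cd_evA /=; ring.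
- apply: (eq_raw (HE 1 2 7)); rewrite coord_mul !cd_gbr // /dform /= /e2 !cd_ev // ?cd_evA /=; ring.
Qed.
End S.

Unset Implicit Arguments.
Theorem theorem3p2 (R : realType) :
  (forall a : R, 0 <= a -> lie_nilpotent (gbr a)) /\
  (forall a b : R, 0 <= a -> 0 <= b ->
     lie_isomorphic (gbr a) (gbr b) -> a = b) /\
  (forall a : R, 0 <= a -> exists J : 'M[R]_8, complex_structure (gbr a) J).
Proof.
split; [|split].
- by move=> a _; apply: nilp.
- by move=> a b a0 b0 hi; apply: (iso_part a0 b0 hi).
- by move=> a _; exists (Jm R); apply: nij.
Qed.
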